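(* Let $1\le j\le d$ and let $X$ be a $d\times d$ positive semidefinite matrix of rank at least $j$. Then there exists a $d\times d$ matrix $W\succ 0$ such that $-X\in\partial\Delta_j(W)$ and $\Gamma_j(X)=\Delta_j(W)$.
   Context: For $x\in\mathbb{R}^d_{+}$ let $x_{(i)}$ denote its $i$-th largest coordinate. For $W\succ 0$ with eigenvalues $\lambda_1\le\dots\le\lambda_d$, $\Delta_j(W)\coloneqq-\sum_{i=1}^j\ln\lambda_i$. For $x\in\mathbb{R}^d_+$, let $k$ be the unique integer with $0\le k\le j-1$ such that $x_{(k)}>\frac{1}{j-k}\sum_{i>k}x_{(i)}\ge x_{(k+1)}$ (with $x_{(0)}=\infty$; such $k$ exists and is unique), and define $\gamma_j(x)\coloneqq\sum_{i=1}^k\ln x_{(i)}+(j-k)\ln\big(\frac{1}{j-k}\sum_{i=k+1}^d x_{(i)}\big)$, with $\ln 0=-\infty$. For $X\succeq 0$ with eigenvalue vector $\lambda$, $\Gamma_j(X)\coloneqq\gamma_j(\lambda)$. The subdifferential $\partial\Delta_j(W)$ is taken in the space of symmetric matrices with the trace inner product: $Y\in\partial\Delta_j(W)$ iff $\Delta_j(Z)\ge\Delta_j(W)+\mathrm{tr}((Z-W)Y)$ for all $Z\succ 0$. *)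

(* Defs.v *)
(* real symmetric d x d matrices represented as nat -> nat -> R,
   only entries with indices < d are relevant. *)
From Stdlib Require Import Reals Lra Lia ClassicalEpsilon.
Open Scope R_scope.

Fixpoint sumn (n : nat) (f : nat -> R) : R :=
  match n with O => 0 | S m => sumn m f + f m end.

Definition Mat := nat -> nat -> R.

Definition mmul (d : nat) (A B : Mat) : Mat :=
  fun i j => sumn d (fun k => A i k * B k j).
Definition msub (A B : Mat) : Mat := fun i j => A i j - B i j.
Definition mopp (A : Mat) : Mat := fun i j => - A i j.
Definition mtr (d : nat) (A : Mat) : R := sumn d (fun i => A i i).

Definition sym (d : nat) (A : Mat) : Prop :=
  forall i j, (i < d)%nat -> (j < d)%nat -> A i j = A j i.

Definition quad (d : nat) (A : Mat) (x : nat -> R) : R :=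
  sumn d (fun i => sumn d (fun j => x i * A i j * x j)).

Definition PD (d : nat) (A : Mat) : Prop :=
  sym d A /\ forall x, (exists i, (i < d)%nat /\ x i <> 0) -> quad d A x > 0.

Definition PSD (d : nat) (A : Mat) : Prop :=
  sym d A /\ forall x, quad d A x >= 0.

Definition rank_ge (d : nat) (A : Mat) (r : nat) : Prop :=
  exists c : nat -> nat, (forall t, (t < r)%nat -> (c t < d)%nat) /\
    forall a : nat -> R,
      (forall i, (i < d)%nat -> sumn r (fun t => a t * A i (c t)) = 0) ->
      forall t, (t < r)%nat -> a t = 0.

Definition orthogonal (d : nat) (U : Mat) : Prop :=
  forall i j, (i < d)%nat -> (j < d)%nat ->
    sumn d (fun k => U k i * U k j) = if Nat.eqb i j then 1 else 0.

(* lam 0 <= ... <= lam (d-1) are the eigenvalues (with multiplicity) of the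
   symmetric matrix A: A = U diag(lam) U^T with U orthogonal. *)
Definition spectrum (d : nat) (A : Mat) (lam : nat -> R) : Prop :=
  (forall i, (S i < d)%nat -> lam i <= lam (S i)) /\
  exists U, orthogonal d U /\
    forall i j, (i < d)%nat -> (j < d)%nat ->
      A i j = sumn d (fun k => U i k * lam k * U j k).

Definition eigvals (d : nat) (A : Mat) : nat -> R :=
  epsilon (inhabits (fun _ : nat => 0)) (spectrum d A).

(* Delta_j(W) = - sum_{i=1}^j ln lambda_i  (lambda ascending) *)
Definition DeltaJ (d j : nat) (W : Mat) : R :=
  - sumn j (fun i => ln (eigvals d W i)).

Definition in_subdiff_Delta (d j : nat) (W Y : Mat) : Prop :=
  forall Z, PD d Z -> DeltaJ d j Z >= DeltaJ d j W + mtr d (mmul d (msub Z W) Y).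

(* gamma_j on a vector given by its decreasingly sorted coordinates
   y 1 >= y 2 >= ... >= y d  (1-indexed: y i = x_(i)). *)
Definition tailavg (d j : nat) (y : nat -> R) (k : nat) : R :=
  sumn (d - k) (fun t => y (S k + t)%nat) / INR (j - k).

Definition kcond (d j : nat) (y : nat -> R) (k : nat) : Prop :=
  (k <= j - 1)%nat /\ (k = O \/ y k > tailavg d j y k) /\
  tailavg d j y k >= y (S k).

Definition kidx (d j : nat) (y : nat -> R) : nat :=
  epsilon (inhabits O) (kcond d j y).

Definition gamma_sorted (d j : nat) (y : nat -> R) : R :=
  let k := kidx d j y in
  sumn k (fun t => ln (y (S t))) + INR (j - k) * ln (tailavg d j y k).

(* x_(i) = lambda_{d-i+1} (1-indexed) = eigvals (d - i) (0-indexed) *)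
Definition desc (d : nat) (lam : nat -> R) : nat -> R := fun i => lam (d - i)%nat.

Definition Gamma (d j : nat) (X : Mat) : R := gamma_sorted d j (desc d (eigvals d X)).

(* Main.v *)
Require Import Defs.
From Stdlib Require Import Reals Lra Lia ClassicalEpsilon Classical Wf_nat.
Open Scope R_scope.

Lemma sumn_ext n f g : (forall i, (i < n)%nat -> f i = g i) -> sumn n f = sumn n g.
Proof. induction n; simpl; intros H; auto. rewrite IHn by (intros; apply H; lia). rewrite H by lia; auto. Qed.

Lemma sumn_plus n f g : sumn n (fun i => f i + g i) = sumn n f + sumn n g.
Proof. induction n; simpl; [lra|rewrite IHn; lra]. Qed.

Lemma sumn_minus n f g : sumn n (fun i => f i - g i) = sumn n f - sumn n g.
Proof. induction n; simpl; [lra|rewrite IHn; lra]. Qed.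

Lemma sumn_scal n c f : sumn n (fun i => c * f i) = c * sumn n f.
Proof. induction n; simpl; [lra|rewrite IHn; lra]. Qed.

Lemma sumn_scal_r n c f : sumn n (fun i => f i * c) = sumn n f * c.
Proof. induction n; simpl; [lra|rewrite IHn; lra]. Qed.

Lemma sumn_zero n : sumn n (fun _ => 0) = 0.
Proof. induction n; simpl; [lra|rewrite IHn; lra]. Qed.

Lemma sumn_const n c : sumn n (fun _ => c) = INR n * c.
Proof. induction n; simpl sumn; [simpl; lra|rewrite IHn, S_INR; lra]. Qed.

Lemma sumn_swap n m f : sumn n (fun i => sumn m (fun j => f i j)) = sumn m (fun j => sumn n (fun i => f i j)).
Proof.
induction n; simpl.
- rewrite sumn_zero; auto.
- rewrite IHn, <- sumn_plus; auto.
Qed.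

Lemma sumn_le n f g : (forall i, (i < n)%nat -> f i <= g i) -> sumn n f <= sumn n g.
Proof. induction n; simpl; intros H; [lra|]. assert (f n <= g n) by (apply H; lia). assert (sumn n f <= sumn n g) by (apply IHn; intros; apply H; lia). lra. Qed.

Lemma sumn_nonneg n f : (forall i, (i < n)%nat -> 0 <= f i) -> 0 <= sumn n f.
Proof. intros H. rewrite <- (sumn_zero n). apply sumn_le; auto. Qed.

Lemma sumn_split a b f : sumn (a + b) f = sumn a f + sumn b (fun i => f (a + i)%nat).
Proof. induction b; simpl. - rewrite Nat.add_0_r; lra. - rewrite Nat.add_succ_r; simpl; rewrite IHb; lra. Qed.

Lemma sumn_first n f : sumn (S n) f = f O + sumn n (fun i => f (S i)).
Proof. replace (S n) with (1 + n)%nat by lia. rewrite sumn_split. simpl. lra. Qed.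

Lemma sumn_rev n f : sumn n (fun i => f (n - 1 - i)%nat) = sumn n f.
Proof.
induction n; [simpl; auto|].
rewrite sumn_first. replace (S n - 1 - 0)%nat with n by lia.
simpl (sumn (S n) f). rewrite <- IHn. rewrite (sumn_ext n (fun i => f (S n - 1 - S i)%nat) (fun i => f (n - 1 - i)%nat)).
- lra.
- intros; f_equal; lia.
Qed.

Lemma sumn_delta n i f : (i < n)%nat -> sumn n (fun k => (if Nat.eqb k i then 1 else 0) * f k) = f i.
Proof.
induction n; intros H; [lia|simpl].
destruct (Nat.eq_dec i n).
- subst. rewrite Nat.eqb_refl. rewrite (sumn_ext n _ (fun _ => 0)), sumn_zero; [lra|].
  intros k Hk. destruct (Nat.eqb_spec k n); [lia|lra].
- rewrite IHn by lia. destruct (Nat.eqb_spec n i); [lia|lra].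
Qed.

Lemma sumn_delta' n i f : (i < n)%nat -> sumn n (fun k => (if Nat.eqb i k then 1 else 0) * f k) = f i.
Proof.
intros H. rewrite <- (sumn_delta n i f H). apply sumn_ext. intros k _.
rewrite Nat.eqb_sym; auto.
Qed.

Lemma sumn_pos n f : (forall i, (i < n)%nat -> 0 <= f i) -> (exists i, (i < n)%nat /\ 0 < f i) -> 0 < sumn n f.
Proof.
induction n; intros H [i [Hi Hp]]; [lia|simpl].
destruct (Nat.eq_dec i n).
- subst. assert (0 <= sumn n f) by (apply sumn_nonneg; intros; apply H; lia). lra.
- assert (0 < sumn n f) by (apply IHn; [intros; apply H; lia| exists i; split; [lia|auto]]).
  assert (0 <= f n) by (apply H; lia). lra.
Qed.

Definition decomp d (A U : Mat) (a : nat -> R) :=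
  forall i j, (i < d)%nat -> (j < d)%nat -> A i j = sumn d (fun k => U i k * a k * U j k).
Definition orth_rows d (U : Mat) := forall i j, (i < d)%nat -> (j < d)%nat ->
  sumn d (fun k => U i k * U j k) = if Nat.eqb i j then 1 else 0.
Definition bil d (A : Mat) (u v : nat -> R) := sumn d (fun a => sumn d (fun b => u a * A a b * v b)).
Definition dot d (u v : nat -> R) := sumn d (fun i => u i * v i).
Definition col (U : Mat) m := fun i => U i m.
Definition sorted_on d (a : nat -> R) := forall i j, (i <= j)%nat -> (j < d)%nat -> a i <= a j.

Lemma sorted_adj d a : (forall i, (S i < d)%nat -> a i <= a (S i)) -> sorted_on d a.
Proof.
intros H i j Hij Hj. induction Hij; [lra|].
assert (a i <= a m) by (apply IHHij; lia). assert (a m <= a (S m)) by (apply H; lia). lra.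
Qed.

Lemma prod_sums n p q f g :
  sumn n (fun m => sumn p (fun a => f a m) * sumn q (fun b => g b m)) =
  sumn p (fun a => sumn q (fun b => sumn n (fun m => f a m * g b m))).
Proof.
transitivity (sumn n (fun m => sumn p (fun a => sumn q (fun b => f a m * g b m)))).
- apply sumn_ext; intros m _. rewrite <- sumn_scal_r. apply sumn_ext; intros a _.
  rewrite <- sumn_scal; auto.
- rewrite sumn_swap. apply sumn_ext; intros a _. rewrite sumn_swap; auto.
Qed.

Lemma bil_decomp d A U a u v : decomp d A U a ->
  bil d A u v = sumn d (fun m => a m * dot d u (col U m) * dot d v (col U m)).
Proof.
intros H. unfold dot, col.
transitivity (sumn d (fun m => sumn d (fun x => u x * U x m * a m) * sumn d (fun y => v y * U y m))).
- rewrite prod_sums. unfold bil. apply sumn_ext; intros x Hx. apply sumn_ext; intros y Hy.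
  rewrite H by auto. rewrite <- sumn_scal, <- sumn_scal_r. apply sumn_ext; intros; ring.
- apply sumn_ext; intros m _. rewrite sumn_scal_r. ring.
Qed.

Lemma parseval d U v w : orth_rows d U ->
  sumn d (fun m => dot d v (col U m) * dot d w (col U m)) = dot d v w.
Proof.
intros H. unfold dot, col. rewrite prod_sums.
apply sumn_ext; intros x Hx.
transitivity (sumn d (fun y => (if Nat.eqb x y then 1 else 0) * (v x * w y))).
- apply sumn_ext; intros y Hy. rewrite <- H by auto. rewrite <- sumn_scal_r. apply sumn_ext; intros; ring.
- apply sumn_delta'; auto.
Qed.

Lemma bil_self d A V b i : decomp d A V b -> orthogonal d V -> (i < d)%nat ->
  bil d A (col V i) (col V i) = b i.
Proof.
intros HA HV Hi. rewrite (bil_decomp d A V b) by auto.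
transitivity (sumn d (fun m => (if Nat.eqb m i then 1 else 0) * b m)).
- apply sumn_ext; intros m Hm. unfold dot, col.
  assert (E : sumn d (fun k => V k i * V k m) = if Nat.eqb m i then 1 else 0).
  { rewrite HV by auto. destruct (Nat.eqb_spec i m), (Nat.eqb_spec m i); auto; lia. }
  rewrite E. destruct (Nat.eqb m i); ring.
- apply sumn_delta; auto.
Qed.

Lemma sumn_ind d m g : (m <= d)%nat ->
  sumn d (fun l => if Nat.ltb l m then g l else 0) = sumn m g.
Proof.
intros H. replace d with (m + (d - m))%nat by lia. rewrite sumn_split.
rewrite (sumn_ext m _ g). rewrite (sumn_ext (d - m) _ (fun _ => 0)). rewrite sumn_zero. lra.
- intros i _. destruct (Nat.ltb_spec (m + i) m); [lia|auto].
- intros i Hi. destruct (Nat.ltb_spec i m); [auto|lia].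
Qed.

Lemma SL d m a c : (m <= d)%nat -> sorted_on d a ->
  (forall l, (l < d)%nat -> 0 <= c l <= 1) -> sumn d c = INR m ->
  sumn d (fun l => a l * c l) >= sumn m a.
Proof.
intros Hm Ha Hc Hs. set (th := a (m - 1)%nat).
assert (E : sumn d (fun l => a l * c l) >= sumn d (fun l => th * c l + (if Nat.ltb l m then a l - th else 0))).
{ apply Rle_ge, sumn_le. intros l Hl. specialize (Hc l Hl).
  destruct (Nat.ltb_spec l m).
  - assert (a l <= th) by (apply Ha; lia). nra.
  - assert (th <= a l) by (apply Ha; lia). nra. }
rewrite sumn_plus, sumn_scal, sumn_ind, sumn_minus, sumn_const, Hs in E by auto. lra.
Qed.

Lemma dot_comm d u v : dot d u v = dot d v u.
Proof. unfold dot; apply sumn_ext; intros; ring. Qed.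

Lemma orth_col_unit d U i : orthogonal d U -> (i < d)%nat -> dot d (col U i) (col U i) = 1.
Proof. intros H Hi. unfold dot, col. rewrite H by auto. rewrite Nat.eqb_refl; auto. Qed.

Lemma sumn_prefix_le m d f : (m <= d)%nat -> (forall i, (i < d)%nat -> 0 <= f i) -> sumn m f <= sumn d f.
Proof.
intros Hm Hf. replace d with (m + (d - m))%nat by lia. rewrite sumn_split.
assert (0 <= sumn (d - m) (fun i => f (m + i)%nat)) by (apply sumn_nonneg; intros; apply Hf; lia). lra.
Qed.

Lemma KF d A U a V m : decomp d A U a -> orthogonal d U -> orth_rows d U -> sorted_on d a ->
  orthogonal d V -> orth_rows d V -> (m <= d)%nat ->
  sumn m (fun i => bil d A (col V i) (col V i)) >= sumn m a.
Proof.
intros HA HU HUr Ha HV HVr Hm.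
set (c := fun l => sumn m (fun i => dot d (col V i) (col U l) * dot d (col V i) (col U l))).
assert (E : sumn m (fun i => bil d A (col V i) (col V i)) = sumn d (fun l => a l * c l)).
{ transitivity (sumn m (fun i => sumn d (fun l => a l * (dot d (col V i) (col U l) * dot d (col V i) (col U l))))).
  - apply sumn_ext; intros i Hi. rewrite (bil_decomp d A U a) by auto. apply sumn_ext; intros; ring.
  - rewrite sumn_swap. apply sumn_ext; intros l _. unfold c. rewrite <- sumn_scal. auto. }
rewrite E. apply SL; auto.
- intros l Hl. split.
  + unfold c. apply sumn_nonneg. intros. apply Rle_0_sqr.
  + unfold c. replace 1 with (dot d (col U l) (col U l)) by (apply orth_col_unit; auto).
    rewrite <- (parseval d V (col U l) (col U l)) by auto.
    assert (sumn m (fun m0 => dot d (col U l) (col V m0) * dot d (col U l) (col V m0)) <=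
            sumn d (fun m0 => dot d (col U l) (col V m0) * dot d (col U l) (col V m0))).
    { apply sumn_prefix_le; auto. intros; apply Rle_0_sqr. }
    assert (sumn m (fun i => dot d (col V i) (col U l) * dot d (col V i) (col U l)) =
            sumn m (fun m0 => dot d (col U l) (col V m0) * dot d (col U l) (col V m0))).
    { apply sumn_ext; intros; rewrite dot_comm; auto. }
    lra.
- unfold c. rewrite sumn_swap.
  transitivity (sumn m (fun _ => 1)).
  + apply sumn_ext; intros i Hi. rewrite parseval by auto. apply orth_col_unit; auto; lia.
  + rewrite sumn_const; lra.
Qed.

Lemma uniq_spec d A U a V b : decomp d A U a -> orthogonal d U -> orth_rows d U -> sorted_on d a ->
  decomp d A V b -> orthogonal d V -> orth_rows d V -> sorted_on d b ->
  forall i, (i < d)%nat -> a i = b i.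
Proof.
intros HA HU HUr Ha HB HV HVr Hb.
assert (P : forall m, (m <= d)%nat -> sumn m a = sumn m b).
{ intros m Hm.
  assert (E1 : sumn m (fun i => bil d A (col V i) (col V i)) = sumn m b).
  { apply sumn_ext; intros; apply (bil_self d A V b); auto; lia. }
  assert (E2 : sumn m (fun i => bil d A (col U i) (col U i)) = sumn m a).
  { apply sumn_ext; intros; apply (bil_self d A U a); auto; lia. }
  pose proof (KF d A U a V m HA HU HUr Ha HV HVr Hm).
  pose proof (KF d A V b U m HB HV HVr Hb HU HUr Hm). lra. }
intros i Hi. pose proof (P (S i) Hi). pose proof (P i ltac:(lia)). simpl in *. lra.
Qed.

Lemma abel d mu e : sorted_on d mu ->
  (forall m, (m <= d)%nat -> sumn m e <= 0) -> sumn d e = 0 ->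
  sumn d (fun l => mu l * e l) >= 0.
Proof.
intros Hmu HD Hd.
destruct d as [|d]; [simpl; lra|].
assert (G : forall n, (n <= d)%nat -> sumn n (fun l => mu l * e l) >= mu n * sumn n e).
{ induction n; intros Hn; simpl; [lra|].
  assert (IH := IHn ltac:(lia)).
  assert (mu n <= mu (S n)) by (apply Hmu; lia).
  assert (sumn n e + e n <= 0) by (apply (HD (S n)); lia). nra. }
simpl. assert (IH := G d (le_n d)). simpl in Hd. nra.
Qed.

Lemma ln_le_sub1 u : 0 < u -> ln u <= u - 1.
Proof. intros H. pose proof (exp_ineq1_le (ln u)). rewrite exp_ln in H0 by auto. lra. Qed.

Lemma FS d j k t mu x :
  (k < j)%nat -> (j <= d)%nat -> sorted_on d mu -> (forall l, (l < d)%nat -> 0 < mu l) ->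
  (forall l, (l < d)%nat -> 0 <= x l) -> 0 < t ->
  (forall i, (i < k)%nat -> 0 < x i) ->
  (forall i, (k <= i)%nat -> (i < d)%nat -> x i <= t) ->
  sumn (d - k) (fun i => x (k + i)%nat) = INR (j - k) * t ->
  sumn d (fun l => mu l * x l) - sumn j (fun l => ln (mu l)) >=
  INR j + sumn k (fun l => ln (x l)) + INR (j - k) * ln t.
Proof.
intros Hkj Hjd Hmu Hmu0 Hx0 Ht Hxk Hxt Hsum.
replace d with (k + (d - k))%nat by lia. rewrite sumn_split.
replace j with (k + (j - k))%nat at 1 by lia. rewrite sumn_split.
replace (INR j) with (INR k + INR (j - k)) by (rewrite <- plus_INR; f_equal; lia).
assert (A : sumn k (fun l => mu l * x l) - sumn k (fun l => ln (mu l)) >= INR k + sumn k (fun l => ln (x l))).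
{ rewrite <- sumn_minus. rewrite <- (Rmult_1_r (INR k)), <- sumn_const, <- sumn_plus.
  apply Rle_ge, sumn_le. intros l Hl.
  assert (0 < mu l) by (apply Hmu0; lia). assert (0 < x l) by auto.
  pose proof (ln_le_sub1 (mu l * x l) ltac:(nra)). rewrite ln_mult in H1 by auto. lra. }
assert (B : sumn (d - k) (fun i => mu (k + i)%nat * x (k + i)%nat) >= t * sumn (j - k) (fun i => mu (k + i)%nat)).
{ assert (SLi := SL (d - k) (j - k) (fun i => mu (k + i)%nat) (fun i => x (k + i)%nat / t)).
  assert (Hc : sumn (d - k) (fun i => x (k + i)%nat / t) = INR (j - k)).
  { unfold Rdiv. rewrite sumn_scal_r, Hsum. field. lra. }
  specialize (SLi ltac:(lia)).
  assert (Hs : sorted_on (d - k) (fun i => mu (k + i)%nat)) by (intros a b Hab Hb; apply Hmu; lia).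
  specialize (SLi Hs).
  assert (Hcb : forall l, (l < d - k)%nat -> 0 <= x (k + l)%nat / t <= 1).
  { intros l Hl. assert (0 <= x (k + l)%nat) by (apply Hx0; lia). assert (x (k + l)%nat <= t) by (apply Hxt; lia).
    split; [apply Rmult_le_pos; [lra| left; apply Rinv_0_lt_compat; lra]|].
    apply (Rmult_le_reg_r t); [lra|]. unfold Rdiv. rewrite Rmult_assoc, Rinv_l by lra. lra. }
  specialize (SLi Hcb Hc).
  rewrite <- sumn_scal.
  replace (sumn (d - k) (fun i => mu (k + i)%nat * x (k + i)%nat)) with
    (t * sumn (d - k) (fun l => mu (k + l)%nat * (x (k + l)%nat / t))).
  - apply Rle_ge. rewrite sumn_scal. apply Rmult_le_compat_l; lra.
  - rewrite <- sumn_scal. apply sumn_ext; intros. field; lra. }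
assert (C : t * sumn (j - k) (fun i => mu (k + i)%nat) - sumn (j - k) (fun i => ln (mu (k + i)%nat)) >=
            INR (j - k) + INR (j - k) * ln t).
{ rewrite <- sumn_scal, <- sumn_minus.
  replace (INR (j - k) + INR (j - k) * ln t) with (INR (j - k) * (1 + ln t)) by ring.
  rewrite <- sumn_const. apply Rle_ge, sumn_le. intros l Hl.
  assert (0 < mu (k + l)%nat) by (apply Hmu0; lia).
  pose proof (ln_le_sub1 (t * mu (k + l)%nat) ltac:(nra)). rewrite ln_mult in H0 by auto. lra. }
lra.
Qed.

Lemma trace_decomp d Z V mu X : decomp d Z V mu ->
  sumn d (fun i => sumn d (fun k => Z i k * X k i)) = sumn d (fun l => mu l * bil d X (col V l) (col V l)).
Proof.
intros HZ. unfold bil, col.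
transitivity (sumn d (fun i => sumn d (fun k => sumn d (fun l => mu l * (V k l * X k i * V i l))))).
- apply sumn_ext; intros i Hi; apply sumn_ext; intros k Hk. rewrite HZ by auto.
  rewrite <- sumn_scal_r. apply sumn_ext; intros; ring.
- transitivity (sumn d (fun i => sumn d (fun l => sumn d (fun k => mu l * (V k l * X k i * V i l))))).
  + apply sumn_ext; intros i _. exact (sumn_swap d d (fun k l => mu l * (V k l * X k i * V i l))).
  + rewrite sumn_swap. apply sumn_ext; intros l _. rewrite <- sumn_scal. rewrite sumn_swap.
    apply sumn_ext; intros k _. rewrite <- sumn_scal. apply sumn_ext; intros; ring.
Qed.

Lemma sumn_opp n f : sumn n (fun i => - f i) = - sumn n f.
Proof. induction n; simpl; [lra|rewrite IHn; lra]. Qed.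

Lemma decomp_opp d X U x : decomp d X U x -> decomp d (mopp X) U (fun m => - x m).
Proof.
intros H i j Hi Hj. unfold mopp. rewrite H by auto.
rewrite <- sumn_opp. apply sumn_ext; intros; ring.
Qed.

Lemma bil_opp d X u : bil d (mopp X) u u = - bil d X u u.
Proof.
unfold bil, mopp. rewrite <- sumn_opp.
apply sumn_ext; intros. rewrite <- sumn_opp. apply sumn_ext; intros; ring.
Qed.

Lemma trace_bound d X U x Z V mu :
  decomp d X U x -> orthogonal d U -> orth_rows d U -> sorted_on d (fun i => - x i) ->
  decomp d Z V mu -> orthogonal d V -> orth_rows d V -> sorted_on d mu ->
  sumn d (fun i => sumn d (fun k => Z i k * X k i)) >= sumn d (fun l => mu l * x l).
Proof.
intros HX HU HUr Hx HZ HV HVr Hmu.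
rewrite (trace_decomp d Z V mu X HZ).
set (a := fun l => bil d X (col V l) (col V l)).
assert (Pre : forall m, (m <= d)%nat -> sumn m (fun l => a l - x l) <= 0).
{ intros m Hm. pose proof (KF d (mopp X) U (fun m => - x m) V m (decomp_opp d X U x HX) HU HUr Hx HV HVr Hm).
  rewrite sumn_minus. unfold a.
  rewrite (sumn_ext m (fun i => bil d (mopp X) (col V i) (col V i)) (fun i => - bil d X (col V i) (col V i))) in H
    by (intros; apply bil_opp).
  rewrite !sumn_opp in H. lra. }
assert (Tot : sumn d (fun l => a l - x l) = 0).
{ rewrite sumn_minus. unfold a.
  transitivity (sumn d (fun l => sumn d (fun m => x m * (dot d (col V l) (col U m) * dot d (col V l) (col U m)))) - sumn d x).
  - f_equal. apply sumn_ext; intros l Hl. rewrite (bil_decomp d X U x) by auto. apply sumn_ext; intros; ring.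
  - rewrite sumn_swap.
    rewrite (sumn_ext d (fun m => sumn d (fun l => x m * _)) x). lra.
    intros m Hm. rewrite sumn_scal.
    rewrite (sumn_ext d _ (fun l => dot d (col U m) (col V l) * dot d (col U m) (col V l)))
      by (intros; rewrite dot_comm; auto).
    rewrite parseval by auto. rewrite orth_col_unit by auto. ring. }
pose proof (abel d mu (fun l => a l - x l) Hmu Pre Tot).
cbv beta in H. rewrite (sumn_ext d (fun l => mu l * (a l - x l)) (fun l => mu l * a l - mu l * x l)) in H by (intros; ring).
rewrite sumn_minus in H. unfold a in H. lra.
Qed.

Lemma least_exists (P : nat -> Prop) n : P n -> exists k, P k /\ forall k', (k' < k)%nat -> ~ P k'.
Proof.
induction n as [n IH] using lt_wf_ind. intros Pn.
destruct (classic (exists k', (k' < n)%nat /\ P k')) as [[k' [Hk' Pk']]|N].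
- apply (IH k' Hk' Pk').
- exists n. split; auto. intros k' Hk' Pk'. apply N; eauto.
Qed.

Lemma k_exists d j y : (1 <= j)%nat -> (j <= d)%nat ->
  (forall n, (n < d)%nat -> 0 <= y (S n)) -> exists k, kcond d j y k.
Proof.
intros Hj1 Hjd Hy.
set (P := fun k => (k <= j - 1)%nat /\ tailavg d j y k >= y (S k)).
assert (Pj : P (j - 1)%nat).
{ split; [lia|]. unfold tailavg. replace (j - (j - 1))%nat with 1%nat by lia. simpl INR.
  replace (d - (j - 1))%nat with (S (d - j)) by lia. rewrite sumn_first.
  replace (S (j - 1) + 0)%nat with (S (j - 1)) by lia.
  assert (0 <= sumn (d - j) (fun i => y (S (j - 1) + S i)%nat)).
  { apply sumn_nonneg; intros i Hi. replace (S (j - 1) + S i)%nat with (S (j + i)) by lia. apply Hy; lia. }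
  unfold Rdiv. rewrite Rinv_1. lra. }
destruct (least_exists P _ Pj) as [k [[Hk1 Hk2] Hmin]].
exists k. split; [auto|split; [|auto]].
destruct k as [|k]; [left; auto|right].
assert (NP : ~ P k) by (apply Hmin; lia).
assert (Hlt : tailavg d j y k < y (S k)).
{ apply Rnot_ge_lt. intros C. apply NP. split; [lia|auto]. }
unfold tailavg in *.
replace (d - k)%nat with (S (d - S k)) in Hlt by lia. rewrite sumn_first in Hlt.
replace (S k + 0)%nat with (S k) in Hlt by lia.
rewrite (sumn_ext (d - S k) (fun i => y (S k + S i)%nat) (fun i => y (S (S k) + i)%nat)) in Hlt
  by (intros; f_equal; lia).
set (Sk := sumn (d - S k) (fun i => y (S (S k) + i)%nat)) in *.
replace (j - k)%nat with (S (j - S k)) in Hlt by lia. rewrite S_INR in Hlt.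
assert (Hpos : 0 < INR (j - S k)) by (apply lt_0_INR; lia).
apply (Rmult_lt_reg_r (INR (j - S k))); [auto|].
unfold Rdiv. rewrite Rmult_assoc, Rinv_l by lra.
apply (Rmult_lt_compat_r (INR (j - S k) + 1)) in Hlt; [|lra].
unfold Rdiv in Hlt. rewrite Rmult_assoc, Rinv_l in Hlt by lra. lra.
Qed.

Lemma rank_pos d j X U x
  (Hker : forall m n (B : Mat), (n < m)%nat -> exists a : nat -> R,
     (exists t, (t < m)%nat /\ a t <> 0) /\ forall l, (l < n)%nat -> sumn m (fun t => a t * B t l) = 0) :
  (1 <= j)%nat -> (j <= d)%nat -> decomp d X U x -> sorted_on d (fun i => - x i) ->
  (forall l, (l < d)%nat -> 0 <= x l) -> rank_ge d X j -> 0 < x (j - 1)%nat.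
Proof.
intros Hj1 Hjd HX Hx Hx0 [c [Hc Hind]].
apply Rnot_le_lt. intros Hle.
assert (Z : forall m, (j - 1 <= m)%nat -> (m < d)%nat -> x m = 0).
{ intros m H1 H2. assert (- x (j - 1)%nat <= - x m) by (apply Hx; lia).
  assert (0 <= x m) by auto. lra. }
destruct (Hker j (j - 1)%nat (fun t l => U (c t) l)) as [a [[t0 [Ht0 Ha0]] Hak]]; [lia|].
apply Ha0. apply (Hind a); auto. intros i Hi.
transitivity (sumn d (fun l => U i l * x l * sumn j (fun t => a t * U (c t) l))).
- transitivity (sumn j (fun t => sumn d (fun l => U i l * x l * (a t * U (c t) l)))).
  + apply sumn_ext; intros t Ht. rewrite HX by auto. rewrite <- sumn_scal. apply sumn_ext; intros; ring.
  + rewrite sumn_swap. apply sumn_ext; intros l _. rewrite <- sumn_scal; auto.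
- rewrite <- (sumn_zero d). apply sumn_ext; intros l Hl.
  destruct (Nat.lt_ge_cases l (j - 1)) as [H|H].
  + rewrite Hak by auto. ring.
  + rewrite Z by auto. ring.
Qed.

Section Main.
Hypothesis Hspec : forall d A, sym d A -> exists lam, spectrum d A lam.
Hypothesis Hrows : forall d U, orthogonal d U -> orth_rows d U.
Hypothesis Hker : forall m n (B : Mat), (n < m)%nat -> exists a : nat -> R,
     (exists t, (t < m)%nat /\ a t <> 0) /\ forall l, (l < n)%nat -> sumn m (fun t => a t * B t l) = 0.

Lemma eig_spec d A : sym d A -> spectrum d A (eigvals d A).
Proof. intros H. unfold eigvals. apply epsilon_spec. apply Hspec; auto. Qed.

Lemma main_raw (d j : nat) (X : Mat) :
  (1 <= j)%nat -> (j <= d)%nat -> PSD d X -> rank_ge d X j ->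
  exists W : Mat, PD d W /\ in_subdiff_Delta d j W (mopp X) /\ Gamma d j X = DeltaJ d j W.
Proof.
intros Hj1 Hjd [HXs HXpsd] Hrank.
destruct (eig_spec d X HXs) as [Hsort [U [HU HXe]]].
set (lam := eigvals d X) in *.
assert (HUr := Hrows d U HU).
assert (Hls : sorted_on d lam) by (apply sorted_adj; auto).
assert (lam_nn : forall l, (l < d)%nat -> 0 <= lam l).
{ intros l Hl. rewrite <- (bil_self d X U lam l HXe HU Hl). apply Rge_le, HXpsd. }
set (U' := fun i m => U i (d - 1 - m)%nat).
set (x := fun m => lam (d - 1 - m)%nat).
assert (HXe' : decomp d X U' x).
{ intros i j' Hi Hj'. rewrite HXe by auto. rewrite <- sumn_rev. apply sumn_ext; intros; auto. }
assert (HU' : orthogonal d U').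
{ intros i j' Hi Hj'. unfold U'. rewrite HU by lia.
  destruct (Nat.eqb_spec (d - 1 - i) (d - 1 - j')), (Nat.eqb_spec i j'); auto; lia. }
assert (HU'r : orth_rows d U').
{ intros i j' Hi Hj'. unfold U'. rewrite <- HUr by auto.
  exact (sumn_rev d (fun k => U i k * U j' k)). }
assert (Hxs : sorted_on d (fun i => - x i)).
{ intros a b Hab Hb. unfold x. assert (lam (d - 1 - b)%nat <= lam (d - 1 - a)%nat) by (apply Hls; lia). lra. }
assert (x_nn : forall l, (l < d)%nat -> 0 <= x l) by (intros; unfold x; apply lam_nn; lia).
assert (x_desc : forall a b, (a <= b)%nat -> (b < d)%nat -> x b <= x a).
{ intros a b Hab Hb. assert (- x a <= - x b) by (apply Hxs; auto). lra. }
set (y := desc d lam).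
assert (yx : forall n, y (S n) = x n) by (intros; unfold y, desc, x; f_equal; lia).
assert (xpos : 0 < x (j - 1)%nat) by (apply (rank_pos d j X U' x Hker); auto).
destruct (k_exists d j y Hj1 Hjd) as [k0 Hk0].
{ intros n Hn. rewrite yx. auto. }
assert (Hk : kcond d j y (kidx d j y)) by (unfold kidx; apply epsilon_spec; exists k0; auto).
set (k := kidx d j y) in *.
destruct Hk as [Hkj [Hk1 Hk2]].
set (t := tailavg d j y k) in *.
assert (Hsum : sumn (d - k) (fun i => x (k + i)%nat) = INR (j - k) * t).
{ unfold t, tailavg. rewrite (sumn_ext (d - k) (fun t0 => y (S k + t0)%nat) (fun i => x (k + i)%nat)).
  - field. apply not_0_INR; lia.
  - intros i _. replace (S k + i)%nat with (S (k + i)) by lia. apply yx. }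
assert (tpos : 0 < t).
{ assert (Hjk : 0 < INR (j - k)) by (apply lt_0_INR; lia).
  assert (x (j - 1)%nat <= sumn (d - k) (fun i => x (k + i)%nat)).
  { replace (d - k)%nat with ((j - 1 - k) + S (d - j))%nat by lia. rewrite sumn_split.
    rewrite sumn_first. replace (k + (j - 1 - k + 0))%nat with (j - 1)%nat by lia.
    assert (0 <= sumn (j - 1 - k) (fun i => x (k + i)%nat)) by (apply sumn_nonneg; intros; apply x_nn; lia).
    assert (0 <= sumn (d - j) (fun i => x (k + (j - 1 - k + S i))%nat)) by (apply sumn_nonneg; intros; apply x_nn; lia).
    lra. }
  nra. }
assert (x_big : forall i, (i < k)%nat -> t < x i).
{ intros i Hi. destruct Hk1 as [Hk1|Hk1]; [lia|].
  replace k with (S (k - 1)) in Hk1 by lia. rewrite yx in Hk1.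
  assert (x (k - 1)%nat <= x i) by (apply x_desc; lia). lra. }
assert (x_small : forall i, (k <= i)%nat -> (i < d)%nat -> x i <= t).
{ intros i H1 H2. rewrite yx in Hk2. assert (x i <= x k) by (apply x_desc; lia). lra. }
set (w := fun l => if Nat.ltb l k then / x l else / t).
set (W := fun a b => sumn d (fun l => U' a l * w l * U' b l)).
assert (HWe : decomp d W U' w) by (intros a b _ _; auto).
assert (w_pos : forall l, (l < d)%nat -> 0 < w l).
{ intros l Hl. unfold w. destruct (Nat.ltb_spec l k).
  - apply Rinv_0_lt_compat. pose proof (x_big l H). lra.
  - apply Rinv_0_lt_compat; auto. }
assert (w_sorted : sorted_on d w).
{ intros a b Hab Hb. unfold w. destruct (Nat.ltb_spec a k), (Nat.ltb_spec b k).
  - assert (x b <= x a) by (apply x_desc; lia). pose proof (x_big b H0). apply Rinv_le_contravar; lra.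
  - pose proof (x_big a H). apply Rinv_le_contravar; lra.
  - lia.
  - lra. }
assert (W_eig : forall l, (l < d)%nat -> eigvals d W l = w l).
{ assert (HWs : sym d W) by (intros a b _ _; unfold W; apply sumn_ext; intros; ring).
  destruct (eig_spec d W HWs) as [Hs' [V [HV HVe]]].
  intros l Hl. symmetry. apply (uniq_spec d W U' w V (eigvals d W)); auto.
  apply sorted_adj; auto. }
assert (DW : DeltaJ d j W = sumn k (fun l => ln (x l)) + INR (j - k) * ln t).
{ unfold DeltaJ. rewrite (sumn_ext j _ (fun l => ln (w l))) by (intros; rewrite W_eig by lia; auto).
  replace j with (k + (j - k))%nat at 1 by lia. rewrite sumn_split.
  rewrite (sumn_ext k _ (fun l => - ln (x l))).
  2: { intros l Hl. unfold w. destruct (Nat.ltb_spec l k); [|lia]. apply ln_Rinv. pose proof (x_big l Hl). lra. }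
  rewrite (sumn_ext (j - k) _ (fun _ => - ln t)).
  2: { intros l Hl. unfold w. destruct (Nat.ltb_spec (k + l) k); [lia|]. apply ln_Rinv; auto. }
  rewrite sumn_opp, sumn_const. ring. }
exists W. split; [|split].
-
  split; [intros a b _ _; unfold W; apply sumn_ext; intros; ring|].
  intros v [i [Hi Hvi]].
  unfold quad. fold (bil d W v v). rewrite (bil_decomp d W U' w) by auto.
  assert (P : 0 < dot d v v).
  { unfold dot. apply sumn_pos; [intros; apply Rle_0_sqr|]. exists i. split; auto.
    apply Rlt_0_sqr; auto. }
  rewrite <- (parseval d U' v v) in P by auto.
  apply Rlt_gt. apply Rlt_le_trans with (w 0%nat * sumn d (fun m => dot d v (col U' m) * dot d v (col U' m))).
  + apply Rmult_lt_0_compat; auto. apply w_pos; lia.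
  + rewrite <- sumn_scal. apply sumn_le; intros m Hm.
    assert (w 0%nat <= w m) by (apply w_sorted; lia). pose proof (Rle_0_sqr (dot d v (col U' m))). unfold Rsqr in *. nra.
-
  intros Z [HZs HZpd].
  destruct (eig_spec d Z HZs) as [Hmus [V [HV HZe]]].
  set (mu := eigvals d Z) in *.
  assert (HVr := Hrows d V HV).
  assert (Hmu : sorted_on d mu) by (apply sorted_adj; auto).
  assert (mu_pos : forall l, (l < d)%nat -> 0 < mu l).
  { intros l Hl. rewrite <- (bil_self d Z V mu l HZe HV Hl). apply HZpd.
    apply NNPP. intros N.
    assert (A : dot d (col V l) (col V l) = 0).
    { unfold dot. rewrite <- (sumn_zero d). apply sumn_ext; intros i Hi.
      destruct (Req_dec (col V l i) 0) as [E|E]; [rewrite E; ring|exfalso; apply N; exists i; auto]. }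
    rewrite orth_col_unit in A by auto. lra. }
  assert (TB := trace_bound d X U' x Z V mu HXe' HU' HU'r Hxs HZe HV HVr Hmu).
  assert (FSi := FS d j k t mu x ltac:(lia) Hjd Hmu mu_pos x_nn tpos
                   ltac:(intros i Hi; pose proof (x_big i Hi); lra) x_small Hsum).
  assert (TW : sumn d (fun i => sumn d (fun k' => W i k' * X k' i)) = INR j).
  { rewrite (trace_decomp d W U' w X HWe).
    rewrite (sumn_ext d _ (fun l => w l * x l)) by (intros; rewrite (bil_self d X U' x) by auto; auto).
    replace d with (k + (d - k))%nat at 1 by lia. rewrite sumn_split.
    rewrite (sumn_ext k _ (fun _ => 1)).
    2: { intros l Hl. unfold w. destruct (Nat.ltb_spec l k); [|lia]. field. pose proof (x_big l Hl). lra. }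
    rewrite (sumn_ext (d - k) _ (fun l => x (k + l)%nat * / t)).
    2: { intros l Hl. unfold w. destruct (Nat.ltb_spec (k + l) k); [lia|]. ring. }
    rewrite sumn_scal_r, Hsum, sumn_const.
    replace (INR j) with (INR k + INR (j - k)) by (rewrite <- plus_INR; f_equal; lia).
    field. lra. }
  assert (TR : mtr d (mmul d (msub Z W) (mopp X)) =
               - sumn d (fun i => sumn d (fun k' => Z i k' * X k' i)) + sumn d (fun i => sumn d (fun k' => W i k' * X k' i))).
  { unfold mtr, mmul, msub, mopp. rewrite <- sumn_opp, <- sumn_plus. apply sumn_ext; intros.
    rewrite <- sumn_opp, <- sumn_plus. apply sumn_ext; intros. ring. }
  rewrite TR, TW, DW. unfold DeltaJ. fold mu. lra.
-
  rewrite DW. unfold Gamma. fold lam. fold y. unfold gamma_sorted. fold k. fold t.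
  f_equal. apply sumn_ext; intros; rewrite yx; auto.
Qed.
End Main.


From HB Require Import structures.
From mathcomp Require Import all_boot all_order all_algebra all_fingroup.
From mathcomp Require Import complex.
From mathcomp Require Import ring lra.
From mathcomp Require Import Rstruct.
Import Order.TTheory GRing.Theory Num.Theory.

Set Implicit Arguments. Unset Strict Implicit. Unset Printing Implicit Defensive.
Local Open Scope ring_scope.

Section M.
Variable R : rcfType.

Lemma ReMr (x : R[i]) (y : R) : complex.Re (x * y%:C)%C = complex.Re x * y.
Proof. by case: x => a b /=; rewrite mulr0 subr0. Qed.
Lemma ImMr (x : R[i]) (y : R) : complex.Im (x * y%:C)%C = complex.Im x * y.
Proof. by case: x => a b /=; rewrite mulr0 add0r. Qed.

Lemma Re_sum (I : finType) (F : I -> R[i]) : complex.Re (\sum_i F i) = \sum_i complex.Re (F i).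
Proof. by apply: (big_morph (@complex.Re R)) => // -[a b] [c d]. Qed.
Lemma Im_sum (I : finType) (F : I -> R[i]) : complex.Im (\sum_i F i) = \sum_i complex.Im (F i).
Proof. by apply: (big_morph (@complex.Im R)) => // -[a b] [c d]. Qed.

Lemma dot_pos m (u : 'rV[R]_m) : u != 0 -> 0 < (u *m u^T) 0 0.
Proof.
move=> u0; rewrite !mxE lt_def; apply/andP; split; last first.
  by apply: sumr_ge0 => i _; rewrite mxE -expr2 sqr_ge0.
apply/negP => /eqP H; move/negP: u0; apply; apply/eqP/matrixP => i j.
rewrite ord1 mxE; apply/eqP; rewrite -sqrf_eq0 expr2.
have := psumr_eq0P (P := predT) (F := fun k => u 0 k * u^T k 0) _ H.
move=> Hs; have := Hs _ j isT; rewrite mxE => ->// k _; rewrite mxE -expr2 sqr_ge0 //.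
Qed.

Lemma real_eigvec n (A : 'M[R]_n.+1) : A^T = A ->
  exists (v : 'rV[R]_n.+1) (a : R), v *m A = a *: v /\ v != 0.
Proof.
move=> sA.
pose AC := map_mx (real_complex R) A.
have [l rl] : exists l, root (char_poly AC) l.
  by apply/closed_rootP; rewrite size_char_poly.
rewrite -eigenvalue_root_char in rl.
case/eigenvalueP: rl => w Hw w0.
pose a := map_mx (@complex.Re R) w; pose b := map_mx (@complex.Im R) w.
case El : l => [al bl].
have Ha : a *m A = al *: a - bl *: b.
  apply/matrixP => i j; have := congr1 (fun M : 'M[R[i]]_(1,n.+1) => complex.Re (M i j)) Hw.
  rewrite /= !mxE El Re_sum => H.
  transitivity (\sum_k complex.Re (w i k * AC k j)).
    by apply: eq_bigr => k _; rewrite /a /AC !mxE ReMr.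
  by rewrite H; case: (w i j) => x y /=.
have Hb : b *m A = bl *: a + al *: b.
  apply/matrixP => i j; have := congr1 (fun M : 'M[R[i]]_(1,n.+1) => complex.Im (M i j)) Hw.
  rewrite /= !mxE El Im_sum => H.
  transitivity (\sum_k complex.Im (w i k * AC k j)).
    by apply: eq_bigr => k _; rewrite /b /AC !mxE ImMr.
  by rewrite H; case: (w i j) => x y /=; rewrite addrC.
have key : (a *m A) *m b^T = a *m (b *m A)^T.
  by rewrite trmx_mul sA mulmxA.
rewrite Ha Hb linearD /= !linearZ /= mulmxDl mulmxDr -!scalemxAl -!scalemxAr in key.
have ab0 : (a != 0) || (b != 0).
    have [a0|a0] := eqVneq a 0; last by apply/orP; left.
    have [b0|b0] := eqVneq b 0; last by apply/orP; right.
    exfalso; move/negP: w0; apply.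
    apply/eqP/matrixP => i j; have := congr1 (fun M : 'M_(1,n.+1) => M i j) a0.
    have := congr1 (fun M : 'M_(1,n.+1) => M i j) b0; rewrite /a /b !mxE.
    by case: (w i j) => x y /= -> ->.
have Hbl : bl = 0.
  have pos : 0 < (a *m a^T) 0 0 + (b *m b^T) 0 0.
    case/orP: ab0 => H.
      by apply: ltr_wpDr; [rewrite !mxE; apply: sumr_ge0 => k _; rewrite !mxE -expr2 sqr_ge0| exact: dot_pos].
    by apply: ltr_wpDl; [rewrite !mxE; apply: sumr_ge0 => k _; rewrite !mxE -expr2 sqr_ge0| exact: dot_pos].
  move: pos key; rewrite mulNmx; set ab := a *m b^T; set aa := a *m a^T; set bb := b *m b^T => pos key.
  clearbody ab aa bb.
  have := congr1 (fun M : 'M_1 => M 0 0) key; rewrite /= !mxE => e.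
  have e2 : bl * (aa 0 0 + bb 0 0) = 0.
    move: e; rewrite ?mxE => e.
    transitivity (-(al * ab 0 0 + bl * - bb 0 0 - (bl * aa 0 0 + al * ab 0 0))); first ring.
    by rewrite e subrr oppr0.
  by move/eqP: e2; rewrite mulf_eq0 (gt_eqF pos) orbF => /eqP.
rewrite Hbl scale0r subr0 in Ha; rewrite Hbl scale0r add0r in Hb.
case/orP: ab0 => H; first by exists a, al.
by exists b, al.
Qed.

Lemma unit_eigvec n (A : 'M[R]_n.+1) : A^T = A ->
  exists (u : 'rV[R]_n.+1) (a : R), u *m A = a *: u /\ u *m u^T = 1%:M.
Proof.
move=> sA; have [v [a [Hv v0]]] := real_eigvec sA.
have sp := dot_pos v0; set s := (v *m v^T) 0 0 in sp.
exists ((Num.sqrt s)^-1 *: v), a; split.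
  by rewrite -scalemxAl Hv !scalerA mulrC.
rewrite linearZ /= -scalemxAl -scalemxAr scalerA.
apply/matrixP => i j; rewrite !ord1 [LHS]mxE -/s [RHS]mxE eqxx.
rewrite -invrM ?unitf_gt0 ?sqrtr_gt0 // -expr2 sqr_sqrtr ?ltW // mulVf ?gt_eqF //.
Qed.

Lemma mx0_eq (A B : 'M[R]_0) : A = B.
Proof. by apply/matrixP => [[]]. Qed.

Lemma householder n (u : 'rV[R]_n.+1) : u *m u^T = 1%:M ->
  exists H : 'M[R]_n.+1, H^T = H /\ H *m H = 1%:M /\ delta_mx 0 0 *m H = u.
Proof.
move=> uu.
set e0 := delta_mx 0 0 : 'rV[R]_n.+1.
pose w := u - e0. have wE : w = u - e0 by [].
set c := (w *m w^T) 0 0.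
set k := 2 / c.
exists (1%:M - k *: (w^T *m w)).
have ww : w *m w^T = c%:M by rewrite [LHS]mx11_scalar.
have e0e0 : e0 *m e0^T = 1%:M.
  apply/matrixP => i j; rewrite !ord1 !mxE (bigD1 0) //= big1 ?addr0; last first.
    by move=> l /negbTE l0; rewrite !mxE l0 andbF mul0r.
  by rewrite !mxE eqxx mulr1.
have ue0 : u *m e0^T = (u 0 0)%:M.
  apply/matrixP => i j; rewrite !ord1 !mxE (bigD1 0) //= big1 ?addr0; last first.
    by move=> l /negbTE l0; rewrite !mxE l0 andbF mulr0.
  by rewrite !mxE eqxx mulr1 mulr1n.
have e0u : e0 *m u^T = (u 0 0)%:M by rewrite -[e0 *m u^T]trmxK trmx_mul trmxK ue0 tr_scalar_mx.
have cE : c = - 2 * w 0 0.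
  have : w *m w^T = (2 - 2 * u 0 0)%:M.
    rewrite wE linearB /= mulmxBl !mulmxBr uu ue0 e0u e0e0.
    by apply/matrixP => i j; rewrite !ord1 !mxE /=; ring.
  move/(congr1 (fun M : 'M_1 => M 0 0)); rewrite -/c => ->.
  rewrite [in LHS]mxE eqxx mulr1n wE !mxE !eqxx /=; ring.
clearbody w.
split.
  by rewrite linearB /= trmx1 linearZ /= trmx_mul trmxK.
split.
  have PP : (w^T *m w) *m (w^T *m w) = c *: (w^T *m w).
    by rewrite mulmxA -[w^T *m w *m w^T]mulmxA ww mul_mx_scalar scalemxAl.
  have kk : k * k * c = 2 * k.
    have [c0|c0] := eqVneq c 0; first by rewrite /k c0 invr0 !mulr0.
    rewrite /k; field; exact: c0.
  rewrite mulmxBl !mulmxBr mulmx1 mul1mx -!scalemxAl -!scalemxAr PP scalerA.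
  rewrite ?mul1mx mulmx1 scalerA kk; set P := w^T *m w; clearbody P; apply/matrixP => i j; rewrite !mxE; ring.
rewrite mulmxBr mulmx1 -scalemxAr mulmxA.
have e0w : e0 *m w^T = (w 0 0)%:M.
  by rewrite wE linearB /= mulmxBr e0u e0e0; apply/matrixP => i j; rewrite !ord1 !mxE !eqxx /=.
rewrite e0w mul_scalar_mx scalerA.
have [c0|c0] := eqVneq c 0.
  have w0 : w = 0.
    apply/eqP; apply/negPn/negP => /dot_pos; by rewrite -/c c0 ltxx.
  by rewrite w0 scaler0 subr0; move: w0; rewrite wE => /eqP; rewrite subr_eq0 => /eqP.
have w00 : w 0 0 != 0 by apply: contra c0 => /eqP w0; rewrite cE w0 mulr0.
have -> : k * w 0 0 = -1 by rewrite /k cE; field; rewrite w00.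
by rewrite scaleN1r opprK wE addrC subrK.
Qed.


Lemma diag_mx11 (a : R) : diag_mx (a%:M : 'rV_1) = a%:M.
Proof. by apply/matrixP => i j; rewrite !ord1 !mxE. Qed.

Lemma spectral_real n (A : 'M[R]_n) : A^T = A ->
  exists (P : 'M[R]_n) (D : 'rV[R]_n), P^T *m P = 1%:M /\ A = P *m diag_mx D *m P^T.
Proof.
elim: n A => [|n IH] A sA.
  by exists 1%:M, 0; split; apply: mx0_eq.
have [u [al [Hu uu]]] := unit_eigvec sA.
have [H [HT [HH e0H]]] := householder uu.
set B := H *m A *m H.
have BT : B^T = B by rewrite /B !trmx_mul HT sA mulmxA.
have e0B : (delta_mx 0 0 : 'rV[R]_n.+1) *m B = al *: delta_mx 0 0.
  by rewrite /B !mulmxA e0H Hu -scalemxAl -e0H -mulmxA HH mulmx1.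
have AE : A = H *m B *m H.
  by rewrite /B !mulmxA HH mul1mx -mulmxA HH mulmx1.
clearbody B.
have Bentry : forall i j : 'I_n.+1, (i : nat) = 0%N -> B i j = al * ((j : nat) == 0%N)%:R.
  move=> i j i0; have -> : i = 0 by apply: val_inj.
  have := congr1 (fun M : 'rV_n.+1 => M 0 j) e0B.
  by rewrite -rowE !mxE.
have ul : ulsubmx (B : 'M_(1 + n)) = al%:M.
  apply/matrixP => i j; rewrite !ord1 !mxE Bentry //=.
  by rewrite mulr1.
have ur : ursubmx (B : 'M_(1 + n)) = 0.
  apply/matrixP => i j; rewrite !ord1 !mxE Bentry //=.
  by rewrite mulr0.
have dl : dlsubmx (B : 'M_(1 + n)) = 0.
  apply/matrixP => i j; rewrite !ord1 !mxE -BT mxE Bentry //=.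
  by rewrite mulr0.
set A' := drsubmx (B : 'M_(1 + n)).
have sA' : A'^T = A' by rewrite /A' trmx_drsub BT.
have [P' [D' [PP' AE']]] := IH A' sA'.
exists (H *m block_mx (1%:M : 'M_1) 0 0 P'), (row_mx (al%:M : 'rV_1) D').
have Bblock : B = block_mx (al%:M : 'M_1) 0 0 A' :> 'M_(1 + n).
  by rewrite -[LHS](@submxK _ 1 n 1 n B) ul ur dl.
split.
  rewrite trmx_mul (tr_block_mx (1%:M : 'M_1)) !trmx0 trmx1 HT mulmxA -[_ *m H *m H]mulmxA HH mulmx1.
  change ((block_mx (1%:M : 'M_1) 0 0 P'^T) *m (block_mx (1%:M : 'M_1) 0 0 P') = (1%:M : 'M_(1+n))).
  rewrite mulmx_block !mulmx0 !mul0mx !mulmx1 !addr0 !add0r PP'.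
  by rewrite -scalar_mx_block.
have K : (block_mx (1%:M:'M_1) 0 0 P' *m diag_mx (row_mx (al%:M:'rV_1) D') *m (block_mx (1%:M:'M_1) 0 0 P')^T : 'M_(1+n)) = block_mx (al%:M : 'M_1) 0 0 A'.
  rewrite diag_mx_row diag_mx11 tr_block_mx !trmx0 trmx1.
  rewrite !mulmx_block !mulmx0 !mul0mx !mulmx1 !mul1mx !addr0 !add0r AE'.
  by rewrite mul0mx.
rewrite AE Bblock -K trmx_mul HT !mulmxA.
by [].
Qed.


Lemma sort_perm n (f : 'I_n -> R) : exists s : {perm 'I_n},
  forall i j : 'I_n, (i <= j)%N -> f (s i) <= f (s j).
Proof.
pose t := [tuple f i | i < n].
have /tuple_permP [p Hp] : perm_eq (sort_tuple <=%R t) t by rewrite perm_sort.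
exists p => i j ij.
have srt : sorted <=%R (sort_tuple <=%R t) by apply: sort_sorted => x y; apply: le_total.
have Hi : forall k : 'I_n, f (p k) = nth 0 (sort_tuple <=%R t) k.
  by move=> k; rewrite Hp -tnth_nth tnth_mktuple tnth_map tnth_ord_tuple.
rewrite !Hi; apply: (sorted_leq_nth le_trans lexx) => //; rewrite inE size_tuple //.
Qed.

Lemma spectral_sorted n (A : 'M[R]_n) : A^T = A -> exists (P : 'M[R]_n) (d : 'I_n -> R),
  (forall i j : 'I_n, (i <= j)%N -> d i <= d j) /\
  (forall i j, \sum_k P k i * P k j = (i == j)%:R) /\
  (forall i j, A i j = \sum_k P i k * d k * P j k).
Proof.
move=> sA; have [P [D [PP AE]]] := spectral_real sA.
have [s Hs] := sort_perm (fun k => D 0 k).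
exists (\matrix_(i, k) P i (s k)), (fun k => D 0 (s k)); split; first exact: Hs.
split.
  move=> i j; have := congr1 (fun M : 'M_n => M (s i) (s j)) PP.
  rewrite !mxE (inj_eq (@perm_inj _ s)) => <-.
  by apply: eq_bigr => k _; rewrite !mxE.
move=> i j; rewrite AE mxE (reindex_inj (@perm_inj _ s)) /=.
apply: eq_bigr => k _; rewrite !mxE (bigD1 (s k)) //= big1 ?addr0.
  by rewrite !mxE eqxx mulr1n.
by move=> l /negbTE lk; rewrite !mxE lk mulr0n mulr0.
Qed.

Lemma orth_rows_mx n (P : 'M[R]_n) : (forall i j, \sum_k P k i * P k j = (i == j)%:R) ->
  forall i j, \sum_k P i k * P j k = (i == j)%:R.
Proof.
move=> H; have PP : P^T *m P = 1%:M.
  by apply/matrixP => i j; rewrite !mxE -H; apply: eq_bigr => k _; rewrite mxE.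
move/mulmx1C: PP => PP i j; have := congr1 (fun M : 'M_n => M i j) PP.
by rewrite !mxE => <-; apply: eq_bigr => k _; rewrite mxE.
Qed.

Lemma kernel_vec m n (B : 'M[R]_(m, n)) : (n < m)%N -> exists a : 'rV[R]_m, a != 0 /\ a *m B = 0.
Proof.
move=> nm.
have K0 : kermx B != 0.
  rewrite -mxrank_eq0 mxrank_ker subn_eq0 -ltnNge.
  by apply: leq_ltn_trans (rank_leq_col B) nm.
have : exists i, row i (kermx B) != 0.
  apply/existsP; apply: contraR K0 => /existsPn H; apply/eqP/row_matrixP => i.
  by have := H i; rewrite negbK row0 => /eqP.
case=> i Hi; exists (row i (kermx B)); split => //.
by rewrite -row_mul mulmx_ker row0.
Qed.

End M.

Local Open Scope ring_scope.
Lemma sumn_big n (f : nat -> R) : Defs.sumn n f = (\sum_(i < n) f i)%R.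
Proof.
elim: n => [|n IH]; first by rewrite big_ord0.
by rewrite big_ord_recr /= -IH.
Qed.

Lemma eqb_inord n (i j : nat) : (i < n.+1)%N -> (j < n.+1)%N ->
  Nat.eqb i j = ((inord i : 'I_n.+1) == inord j).
Proof.
move=> Hi Hj; apply/idP/idP.
  by move/Nat.eqb_spec => ->.
by move/eqP/(congr1 val); rewrite /= !inordK // => ->; apply/Nat.eqb_spec.
Qed.

Lemma Hspec_proof : forall d A, sym d A -> exists lam, spectrum d A lam.
Proof.
move=> [|n] A sA.
  exists (fun _ => 0%R); split => [i Hi|]; first by lia.
  by exists (fun _ _ => 0%R); split => [i j Hi|i j Hi]; lia.
pose M : 'M[R]_n.+1 := \matrix_(i, j) A i j.
have MT : M^T = M.
  apply/matrixP => i j; rewrite !mxE sA //; exact: (ssrnat.ltP (ltn_ord _)).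
have [P [dd [Hs [Ho He]]]] := spectral_sorted MT.
exists (fun k => dd (inord k)); split.
  move=> i Hi; apply/RleP; apply: Hs; rewrite !inordK //; apply/ssrnat.ltP; lia.
exists (fun i k => P (inord i) (inord k)); split.
  move=> i j /ssrnat.ltP Hi /ssrnat.ltP Hj; rewrite sumn_big.
  rewrite (eq_bigr (fun k : 'I_n.+1 => P k (inord i) * P k (inord j))%R); last first.
    by move=> k _; rewrite inord_val.
  by rewrite Ho (@eqb_inord n _ _ Hi Hj); case: (_ == _).
move=> i j /ssrnat.ltP Hi /ssrnat.ltP Hj; rewrite sumn_big.
have := He (inord i) (inord j); rewrite mxE !inordK // => ->.
by apply: eq_bigr => k _; rewrite inord_val.
Qed.

Lemma Hrows_proof : forall d U, Defs.orthogonal d U -> orth_rows d U.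
Proof.
move=> [|n] U HU i j Hi Hj; first by lia.
pose M : 'M[R]_n.+1 := \matrix_(i, j) U i j.
have Ho : forall a b : 'I_n.+1, (\sum_k M k a * M k b)%R = (a == b)%:R.
  move=> a b; have := HU a b (ssrnat.ltP (ltn_ord a)) (ssrnat.ltP (ltn_ord b)).
  rewrite sumn_big (@eqb_inord n _ _ (ltn_ord a) (ltn_ord b)) !inord_val => E.
  rewrite -[RHS](_ : (if a == b then 1%R else 0%R) = _); last by case: (a == b).
  by rewrite -E; apply: eq_bigr => k _; rewrite !mxE.
have := orth_rows_mx Ho (inord i) (inord j).
move/ssrnat.ltP: Hi => Hi; move/ssrnat.ltP: Hj => Hj.
rewrite sumn_big (@eqb_inord n _ _ Hi Hj) => E.
rewrite (_ : (if _ then 1%R else 0%R) = ((inord i : 'I_n.+1) == inord j)%:R); last by case: (_ == _).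
by rewrite -E; apply: eq_bigr => k _; rewrite !mxE !inordK.
Qed.

Lemma Hker_proof : forall m n (B : Mat), (n < m)%coq_nat -> exists a : nat -> R,
     (exists t, (t < m)%coq_nat /\ a t <> 0%R) /\ forall l, (l < n)%coq_nat -> Defs.sumn m (fun t => a t * B t l)%R = 0%R.
Proof.
move=> [|m] n B Hnm; first by lia.
pose B' : 'M[R]_(m.+1, n) := \matrix_(t, l) B t l.
have Hb : (n < m.+1)%N by apply/ssrnat.ltP; lia.
have [a [a0 aB]] := kernel_vec B' Hb.
exists (fun t => a 0 (inord t)); split.
  have [t0 Ht0] : exists t0, a 0 t0 != 0%R.
    apply/existsP; apply: contraR a0 => /existsPn H; apply/eqP/matrixP => i j.
    by rewrite !ord1 !mxE; apply/eqP; have := H j; rewrite negbK.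
  exists t0; split; first by move: (ltn_ord t0) => /ssrnat.ltP.
  by rewrite inord_val; apply/eqP.
move=> l Hl; rewrite sumn_big.
have Hl' : (l < n)%N by apply/ssrnat.ltP.
have := congr1 (fun M : 'rV[R]_n => M 0 (Ordinal Hl')) aB; rewrite !mxE => E.
rewrite -[RHS]E; apply: eq_bigr => t _; rewrite inord_val !mxE //.
Qed.


Unset Implicit Arguments.
Local Close Scope ring_scope.
Open Scope R_scope.

Theorem lemma4p5 (d j : nat) (X : Mat) :
  (1 <= j)%coq_nat -> (j <= d)%coq_nat -> PSD d X -> rank_ge d X j ->
  exists W : Mat, PD d W /\ in_subdiff_Delta d j W (mopp X) /\ Gamma d j X = DeltaJ d j W.
Proof. exact (main_raw Hspec_proof Hrows_proof Hker_proof d j X). Qed.
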